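(* Let $X=\{a_1,\dots,a_\ell\}$ be a finite set of $\ell$ distinct points and $N\ge 2$, and let $\mu_*$ be an extreme point of $\mathcal{P}_{N\text{-}rep}(X^2)$ with one-point marginal $\lambda$. Then: (a) $\mu_*$ is the unique maximizer over $\mu\in\mathcal{P}_{N\text{-}rep}(X^2)$ of $$J_\lambda[\mu]=\frac{2N}{N-1}\sum_{i=1}^\ell\lambda_i(M_1\mu)_i+W[\mu];$$ (b) in particular, $\mu_*$ is the unique maximizer of $W[\mu]$ over $\mu\in\mathcal{P}_{N\text{-}rep}(X^2)$ subject to $M_1\mu=\lambda$.
   Context: Probability measures on $X$ are identified with vectors $(\lambda_i)_{i}$, $\lambda_i=\lambda(\{a_i\})$; for a measure $\mu$ on $X^2$, $\mu_{ij}=\mu(\{(a_i,a_j)\})$ and $(M_1\mu)_i=\sum_j\mu_{ij}$ is its first marginal. A probability measure $\gamma$ on $X^N$ is symmetric if $\gamma(A_1\times\cdots\times A_N)=\gamma(A_{\sigma(1)}\times\cdots\times A_{\sigma(N)})$ for all $A_i\subseteq X$ and all permutations $\sigma$; a probability measure $\mu$ on $X^2$ is $N$-representable if $\mu(A)=\gamma(A\times X^{N-2})$ for all $A\subseteq X^2$ for some symmetric probability measure $\gamma$ on $X^N$; $\mathcal{P}_{N\text{-}rep}(X^2)$ is the set of these. $W[\mu]=\int_{X\times X}d(x,y)^p\,d\mu(x,y)=\sum_{i\ne j}\mu_{ij}$ is the Wasserstein cost ($1\le p<\infty$) with respect to the discrete metric $d(x,y)=1$ if $x\neq y$, $d(x,x)=0$.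 *)

(* Defs.v *)
(* Discrete measures on finite sets as nonnegative real-valued
   finite functions (weights of atoms). *)
From mathcomp Require Import all_boot all_order fingroup perm all_algebra.
Set Implicit Arguments. Unset Strict Implicit. Unset Printing Implicit Defensive.
Import Order.TTheory GRing.Theory Num.Theory.
Local Open Scope ring_scope.

Section Defs.
Variables (R : realFieldType) (X : finType).

Definition mass (T : finType) (m : {ffun T -> R}) (A : {set T}) : R :=
  \sum_(t in A) m t.

Definition is_prob (T : finType) (m : {ffun T -> R}) : Prop :=
  (forall t, 0 <= m t) /\ \sum_t m t = 1.

Definition prodset (N : nat) (A : 'I_N -> {set X}) : {set {ffun 'I_N -> X}} :=
  [set x : {ffun 'I_N -> X} | [forall i, x i \in A i]].

Definition symmetric_prob (N : nat) (g : {ffun {ffun 'I_N -> X} -> R}) : Prop :=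
  is_prob g /\
  forall (A : 'I_N -> {set X}) (s : 'S_N),
    mass g (prodset A) = mass g (prodset (fun i => A (s i))).

(* the set A x X^{N-2} in X^N, for A a subset of X^2 (first two coordinates) *)
Definition cyl (N : nat) (A : {set X * X}) : {set {ffun 'I_N -> X}} :=
  [set x : {ffun 'I_N -> X} | [exists i : 'I_N, exists j : 'I_N,
             [&& val i == 0%N, val j == 1%N & (x i, x j) \in A]]].

Definition N_rep (N : nat) (mu : {ffun X * X -> R}) : Prop :=
  is_prob mu /\
  exists g : {ffun {ffun 'I_N -> X} -> R}, symmetric_prob g /\
    forall A : {set X * X}, mass mu A = mass g (cyl N A).

Definition extreme_point (S : {ffun X * X -> R} -> Prop) (mu : {ffun X * X -> R}) : Prop :=
  S mu /\
  forall (mu1 mu2 : {ffun X * X -> R}) (t : R), S mu1 -> S mu2 -> 0 < t < 1 ->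
    (forall p, mu p = t * mu1 p + (1 - t) * mu2 p) -> mu1 = mu2.

Definition M1 (mu : {ffun X * X -> R}) : {ffun X -> R} :=
  [ffun x => \sum_y mu (x, y)].

Definition ddisc (x y : X) : R := if x == y then 0 else 1.

(* Wasserstein cost W[mu] = \int d(x,y)^p dmu; for the discrete metric
   d^p = d for every p >= 1, so W[mu] = sum_{i<>j} mu_ij *)
Definition Wcost (mu : {ffun X * X -> R}) : R :=
  \sum_q ddisc q.1 q.2 * mu q.

Definition Jfun (N : nat) (lam : {ffun X -> R}) (mu : {ffun X * X -> R}) : R :=
  (2 * N%:R) / (N%:R - 1) * (\sum_x lam x * M1 mu x) + Wcost mu.

End Defs.

(* Main.v *)
Require Import Defs.
From mathcomp Require Import all_boot all_order fingroup perm all_algebra.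
From mathcomp Require Import ring.
Set Implicit Arguments. Unset Strict Implicit. Unset Printing Implicit Defensive.
Import Order.TTheory GRing.Theory Num.Theory.
Local Open Scope ring_scope.

Section Aux.
Variables (R : realFieldType) (X : finType) (n : nat).
Local Notation N := n.+2.
Local Notation cfg := {ffun 'I_N -> X}.

Definition i0 : 'I_N := ord0.
Definition i1 : 'I_N := @Ordinal N 1 isT.
Definition phi (s : 'S_N) (x : cfg) : cfg := [ffun i => x (s i)].
Definition invar (g : {ffun cfg -> R}) := forall s x, g (phi s x) = g x.
Definition Pm (g : {ffun cfg -> R}) : {ffun X * X -> R} :=
  [ffun p => \sum_x g x * (p == (x i0, x i1))%:R].
Definition cnt (x : cfg) : {ffun X -> R} := [ffun a => \sum_k (x k == a)%:R].
Definition DD : R := N%:R * (N%:R - 1).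
Definition C (m : {ffun X -> R}) : {ffun X * X -> R} :=
  [ffun p => (m p.1 * m p.2 - (p.1 == p.2)%:R * m p.1) / DD].

Lemma NR1 : (N%:R - 1 : R) = n.+1%:R.
Proof. by rewrite mulrSr addrK. Qed.

Lemma NR_gt0 : (0 : R) < N%:R. Proof. exact: ltr0Sn. Qed.
Lemma NR1_gt0 : (0 : R) < N%:R - 1. Proof. rewrite NR1; exact: ltr0Sn. Qed.
Lemma DD_gt0 : 0 < DD. Proof. apply: mulr_gt0; [exact NR_gt0 | exact NR1_gt0]. Qed.

Lemma sum_delta (T : finType) (A : {pred T}) (q : T) :
  \sum_(p in A) ((p == q)%:R : R) = (q \in A)%:R.
Proof.
rewrite big_mkcond (bigD1 q) //= eqxx big1 ?addr0; first by case: (q \in A).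
by move=> p /negbTE ->; case: (p \in A).
Qed.

Lemma sum_eqr (T : finType) (a : T) (F : T -> R) :
  \sum_b (a == b)%:R * F b = F a.
Proof.
rewrite (bigD1 a) //= eqxx mul1r big1 ?addr0 // => b.
by rewrite eq_sym => /negbTE ->; rewrite mul0r.
Qed.

Lemma sum_ind_in (T : finType) (A : {pred T}) (F : T -> R) :
  \sum_(x in A) F x = \sum_x F x * (x \in A)%:R.
Proof.
rewrite big_mkcond; apply: eq_bigr => x _; case: (x \in A).
  by rewrite mulr1. by rewrite mulr0.
Qed.

Lemma phiK s : cancel (phi s) (phi (s^-1)%g).
Proof. by move=> x; apply/ffunP => i; rewrite !ffunE permKV. Qed.

Lemma phi_inj s : injective (phi s).
Proof. exact: can_inj (phiK s). Qed.

Lemma sum_inv g s (F : cfg -> R) : invar g ->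
  \sum_x g x * F (phi s x) = \sum_x g x * F x.
Proof.
move=> Hg; rewrite [RHS](reindex_inj (@phi_inj s)) /=.
by apply: eq_bigr => x _; rewrite Hg.
Qed.

Lemma sym_inv g : symmetric_prob g -> invar g.
Proof.
case=> _ H s x; have := H (fun i => [set x i]) s.
have E1 : prodset (fun i => [set x i]) = [set x].
  apply/setP=> y; rewrite !inE; apply/forallP/eqP => [Hy|->].
    by apply/ffunP=> i; move: (Hy i); rewrite inE => /eqP.
  by move=> i; rewrite inE.
have E2 : prodset (fun i => [set x (s i)]) = [set phi s x].
  apply/setP=> y; rewrite !inE; apply/forallP/eqP => [Hy|->].
    by apply/ffunP=> i; move: (Hy i); rewrite inE ffunE => /eqP.
  by move=> i; rewrite inE ffunE.
by rewrite /mass E1 E2 !big_set1 => ->.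
Qed.

Lemma inv_sym g : invar g -> forall (A : 'I_N -> {set X}) (s : 'S_N),
  mass g (prodset A) = mass g (prodset (fun i => A (s i))).
Proof.
move=> Hg A s; rewrite /mass (sum_ind_in (mem (prodset A))) (sum_ind_in (mem (prodset (fun i => A (s i))))) .
rewrite -(sum_inv s (fun x => (x \in prodset (fun i => A (s i)))%:R) Hg).
apply: eq_bigr => x _.
have -> : (phi s x \in prodset (fun i => A (s i))) = (x \in prodset A); last by [].
rewrite !inE; apply/forallP/forallP => H i.
  by move: (H ((s^-1)%g i)); rewrite ffunE permKV.
by rewrite ffunE; exact: H.
Qed.

Lemma cyl_mem (A : {set X * X}) (x : cfg) : (x \in cyl N A) = ((x i0, x i1) \in A).
Proof.
rewrite inE; apply/existsP/idP.
  case=> i /existsP [j /and3P [/eqP Hi /eqP Hj HA]].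
  have -> : i0 = i by apply: val_inj.
  by have -> : i1 = j by apply: val_inj.
by move=> H; exists i0; apply/existsP; exists i1; rewrite H.
Qed.

Lemma Pm_rep g (A : {set X * X}) : mass (Pm g) A = mass g (cyl N A).
Proof.
rewrite /mass [RHS]sum_ind_in.
rewrite (eq_bigr (fun p => \sum_x g x * (p == (x i0, x i1))%:R)); last first.
  by move=> p _; rewrite ffunE.
rewrite exchange_big /=; apply: eq_bigr => x _.
by rewrite -mulr_sumr sum_delta cyl_mem.
Qed.

Lemma Pm_prob g : is_prob g -> is_prob (Pm g).
Proof.
case=> g0 g1; split.
  move=> p; rewrite ffunE; apply: sumr_ge0 => x _; apply: mulr_ge0; [exact: g0 | exact: ler0n].
have := Pm_rep g setT; rewrite /mass.
rewrite (eq_bigl xpredT); last by move=> p; rewrite inE.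
move=> ->; rewrite -[RHS]g1; apply: eq_bigl => x; by rewrite cyl_mem inE.
Qed.

Lemma Nrep_Pm g : symmetric_prob g -> N_rep N (Pm g).
Proof.
move=> Hg; split; first exact: Pm_prob Hg.1.
by exists g; split => // A; exact: Pm_rep.
Qed.

Lemma Nrep_eq (mu : {ffun X * X -> R}) g :
  (forall A, mass mu A = mass g (cyl N A)) -> mu = Pm g.
Proof.
move=> H; apply/ffunP => p; have := H [set p].
by rewrite -Pm_rep /mass !big_set1.
Qed.

Lemma perm2 (k l : 'I_N) : k != l -> exists s : 'S_N, s i0 = k /\ s i1 = l.
Proof.
move=> kl.
have Hl : tperm i0 k l != i0.
  apply/eqP => H; move/eqP: kl; apply.
  by have := congr1 (tperm i0 k) H; rewrite tpermK tpermL => <-.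
exists (tperm i1 (tperm i0 k l) * tperm i0 k)%g; rewrite !permM; split.
  by rewrite (tpermD (x:=i1)) // tpermL.
by rewrite tpermL tpermK.
Qed.

Lemma sym_pair g a b (k l : 'I_N) : invar g -> k != l ->
  \sum_x g x * ((x k == a) && (x l == b))%:R =
  \sum_x g x * ((x i0 == a) && (x i1 == b))%:R.
Proof.
move=> Hg kl; have [s [Hs0 Hs1]] := perm2 kl.
rewrite -(sum_inv s (fun x => ((x i0 == a) && (x i1 == b))%:R) Hg).
by apply: eq_bigr => x _; rewrite !ffunE Hs0 Hs1.
Qed.

Lemma cnt_phi s x : cnt (phi s x) = cnt x.
Proof.
apply/ffunP=> a; rewrite !ffunE [RHS](reindex_inj (@perm_inj _ s)) /=.
by apply: eq_bigr => k _; rewrite ffunE.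
Qed.

Lemma cnt_sum x : \sum_a cnt x a = N%:R.
Proof.
under eq_bigr do rewrite ffunE.
rewrite exchange_big /=.
rewrite (eq_bigr (fun _ => 1)); last first.
  by move=> k _; rewrite -[RHS](sum_eqr (x k) (fun _ => 1)); apply: eq_bigr => a _; rewrite mulr1.
by rewrite sumr_const card_ord.
Qed.

End Aux.

Section Aux2.
Variables (R : realFieldType) (X : finType) (n : nat).
Local Notation N := n.+2.
Local Notation cfg := {ffun 'I_N -> X}.
Local Notation i0 := (@i0 n).
Local Notation i1 := (@i1 n).
Local Notation DD := (@DD R n).
Local Notation C := (@C R X n).
Local Notation cnt := (@cnt R X n).
Local Notation Pm := (@Pm R X n).

Lemma Hind (x : cfg) (a b : X) k :
  ((x k == a) && (x k == b))%:R = (a == b)%:R * (x k == a)%:R :> R.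
Proof.
case: (eqVneq (x k) a) => [->|_] /=; last by rewrite mulr0.
by rewrite ?eqxx ?mulr1.
Qed.

Lemma Hcnt (x : cfg) (a b : X) :
  \sum_k \sum_l (k != l)%:R * ((x k == a) && (x l == b))%:R
  = cnt x a * cnt x b - (a == b)%:R * cnt x a.
Proof.
rewrite !ffunE mulr_suml.
transitivity (\sum_(k : 'I_N) (\sum_(l : 'I_N) ((x k == a)%:R * (x l == b)%:R)
    - \sum_(l : 'I_N) (k == l)%:R * ((x k == a) && (x l == b))%:R : R)).
  apply: eq_bigr => k _; rewrite -sumrN -big_split /=; apply: eq_bigr => l _.
  rewrite -mulnb natrM; case: eqP => _ /=; by rewrite ?mul1r ?mul0r ?subr0 ?oppr0 ?addr0 ?subrr.
rewrite big_split /= sumrN mulr_sumr; congr (_ - _); apply: eq_bigr => k _.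
by rewrite mulr_sumr.
by rewrite sum_eqr Hind.
Qed.

Lemma Pm_formula g : invar g -> forall p, Pm g p = \sum_x g x * C (cnt x) p.
Proof.
move=> Hg [a b].
set Pab := \sum_x g x * ((x i0 == a) && (x i1 == b))%:R.
have E0 : Pm g (a,b) = Pab.
  by rewrite ffunE; apply: eq_bigr => x _; rewrite xpair_eqE (eq_sym a) (eq_sym b).
have Hpairs : \sum_(k : 'I_N) \sum_(l : 'I_N) ((k != l)%:R : R) = DD.
  rewrite /DD (eq_bigr (fun _ => N%:R - 1)); first by rewrite sumr_const card_ord mulr_natl.
  move=> k _.
  have H1 : \sum_(l : 'I_N) (1 : R) = N%:R by rewrite sumr_const card_ord.
  have H2 : \sum_(l : 'I_N) ((k == l)%:R : R) = 1.
    by rewrite -[RHS](sum_eqr k (fun _ => 1)); apply: eq_bigr => l _; rewrite mulr1.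
  rewrite (eq_bigr (fun l => 1 - (k == l)%:R)); last first.
    by move=> l _; case: eqP => _ /=; rewrite ?subrr ?subr0.
  by rewrite big_split /= sumrN H1 H2.
have main : Pab * DD = \sum_x g x * (cnt x a * cnt x b - (a == b)%:R * cnt x a).
  rewrite -Hpairs mulr_sumr.
  under [RHS]eq_bigr do rewrite -Hcnt mulr_sumr.
  rewrite exchange_big /=; apply: eq_bigr => k _.
  under [RHS]eq_bigr do rewrite mulr_sumr.
  rewrite mulr_sumr exchange_big /=; apply: eq_bigr => l _.
  case: (eqVneq k l) => [<-|kl] /=.
    rewrite mulr0; apply/esym/big1 => x _; by rewrite mul0r mulr0.
  rewrite mulr1 /Pab -(sym_pair a b Hg kl); apply: eq_bigr => x _; by rewrite mul1r.
have DD0 : DD != 0 by rewrite gt_eqF // DD_gt0.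
rewrite E0 -[Pab](mulfK DD0) main mulr_suml; apply: eq_bigr => x _.
by rewrite /C [in RHS]ffunE /= mulrA.
Qed.

Lemma NR0 : (N%:R : R) != 0. Proof. by rewrite gt_eqF // NR_gt0. Qed.
Lemma NR10 : (N%:R - 1 : R) != 0. Proof. by rewrite gt_eqF // NR1_gt0. Qed.

Lemma M1C (m : {ffun X -> R}) : \sum_a m a = N%:R -> forall a, M1 (C m) a = m a / N%:R.
Proof.
move=> Hm a; rewrite ffunE.
under eq_bigr do rewrite /C ffunE /=.
rewrite -mulr_suml big_split /= sumrN -mulr_sumr Hm sum_eqr /DD.

by field; rewrite -natrD add2n NR0 NR10.
Qed.

Lemma WC (m : {ffun X -> R}) : \sum_a m a = N%:R ->
  Wcost (C m) = (N%:R ^+ 2 - \sum_a m a ^+ 2) / DD.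
Proof.
move=> Hm; rewrite /Wcost.
under eq_bigr do rewrite /C ffunE.
rewrite -(pair_bigA _ (fun a b => @ddisc R X a b * ((m a * m b - (a == b)%:R * m a) / DD))) /=.
rewrite (eq_bigr (fun a => (m a * N%:R - m a ^+ 2) / DD)).
  by rewrite -mulr_suml big_split /= sumrN -mulr_suml Hm expr2.
move=> a _; rewrite (eq_bigr (fun b => (m a * m b - (a == b)%:R * (m a * m a)) / DD)).
  by rewrite -mulr_suml big_split /= sumrN -mulr_sumr Hm sum_eqr expr2.
move=> b _; rewrite /ddisc; case: eqVneq => [<-|_] /=;
  by rewrite ?mulr1n ?mulr0n ?mul0r ?mul1r ?subrr ?mul0r.
Qed.

Lemma J_lin (lam : {ffun X -> R}) (mu : {ffun X * X -> R}) (w : cfg -> R)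
  (nu : cfg -> {ffun X * X -> R}) :
  (forall p, mu p = \sum_x w x * nu x p) ->
  Jfun N lam mu = \sum_x w x * Jfun N lam (nu x).
Proof.
move=> H.
have HM : forall a, M1 mu a = \sum_x w x * M1 (nu x) a.
  move=> a; rewrite ffunE; under eq_bigr do rewrite H.
  rewrite exchange_big /=; apply: eq_bigr => x _; by rewrite ffunE mulr_sumr.
have HW : Wcost mu = \sum_x w x * Wcost (nu x).
  rewrite /Wcost; under eq_bigr do rewrite H mulr_sumr.
  rewrite exchange_big /=; apply: eq_bigr => x _; rewrite mulr_sumr.
  by apply: eq_bigr => q _; rewrite mulrCA.
rewrite /Jfun HW.
under [RHS]eq_bigr do rewrite mulrDr.
rewrite big_split /=; congr (_ + _).
under eq_bigr do rewrite HM mulr_sumr.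
rewrite exchange_big mulr_sumr /=; apply: eq_bigr => x _.
rewrite [RHS]mulrCA; congr (_ * _); rewrite mulr_sumr.
by apply: eq_bigr => a _; rewrite mulrCA.
Qed.

Definition EE (n0 m : {ffun X -> R}) : R :=
  (2 * \sum_a (n0 a * m a) + N%:R ^+ 2 - \sum_a m a ^+ 2) / DD.

Lemma JC (n0 m : {ffun X -> R}) : \sum_a n0 a = N%:R -> \sum_a m a = N%:R ->
  Jfun N (M1 (C n0)) (C m) = EE n0 m.
Proof.
move=> Hn Hm; rewrite /Jfun WC // /EE.
under eq_bigr do rewrite !M1C //.
rewrite (eq_bigr (fun a => n0 a * m a / (N%:R * N%:R))); last first.
  by move=> a _; field; rewrite -natrD add2n NR0.
rewrite -mulr_suml /DD.
by field; rewrite -natrD add2n NR0 NR10.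
Qed.

Lemma EE_diff (n0 m : {ffun X -> R}) :
  EE n0 n0 - EE n0 m = (\sum_a (n0 a - m a) ^+ 2) / DD.
Proof.
rewrite (eq_bigr (fun a => n0 a ^+ 2 + (- (2 * (n0 a * m a)) + m a ^+ 2))); last first.
  by move=> a _; ring.
have Hsq : \sum_a n0 a * n0 a = \sum_a n0 a ^+ 2 by apply: eq_bigr => a _; rewrite expr2.
rewrite big_split /= big_split /= sumrN -mulr_sumr /EE Hsq.
have DD0 : DD != 0 by rewrite gt_eqF // DD_gt0.
move: DD0; generalize DD => D D0.
field; exact D0.
Qed.

Lemma sum_ind_pred (T : finType) (P : pred T) (F : T -> R) :
  \sum_x (P x)%:R * F x = \sum_(x | P x) F x.
Proof.
rewrite [RHS]big_mkcond /=; apply: eq_bigr => x _; case: (P x) => /=.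
  by rewrite mul1r. by rewrite mul0r.
Qed.

Lemma restrict (g : {ffun cfg -> R}) (S : pred cfg) (c : R) :
  symmetric_prob g -> (forall s x, S (phi s x) = S x) -> 0 < c ->
  \sum_(x | S x) g x = c -> symmetric_prob [ffun x => (S x)%:R * g x / c].
Proof.
move=> Hg HS c0 Hc; have Hi := sym_inv Hg; case: Hg => [[g0 g1] _].
have Hi' : invar [ffun x => (S x)%:R * g x / c] by move=> s x; rewrite !ffunE HS Hi.
split; last exact: inv_sym Hi'.
split.
  move=> x; rewrite ffunE; apply: divr_ge0; last exact: ltW.
  by apply: mulr_ge0; [exact: ler0n | exact: g0].
under eq_bigr do rewrite ffunE.
have -> : \sum_x (S x)%:R * g x / c = (\sum_x (S x)%:R * g x) / c by rewrite mulr_suml.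
have -> : \sum_x (S x)%:R * g x = c.
  rewrite -Hc [RHS]big_mkcond /=; apply: eq_bigr => x _; case: (S x) => /=.
    by rewrite mul1r. by rewrite mul0r.
by rewrite divff // gt_eqF.
Qed.

Lemma extreme_C (mus : {ffun X * X -> R}) :
  extreme_point (N_rep N) mus -> exists x0 : cfg, mus = C (cnt x0).
Proof.
case=> [[Hp [g [Hg Hrep]]] Hext].
have Hinv := sym_inv Hg.
have Emu := Nrep_eq Hrep.
have Hform := Pm_formula Hinv.
have Hg' := Hg.
case: Hg' => [[g0 g1] _].
have [x0 gx0] : exists x0, 0 < g x0.
  apply/existsP; apply: contraT => /existsPn Hno.
  have Hz : forall x, g x = 0.
    by move=> x; move: (g0 x); rewrite le_eqVlt (negbTE (Hno x)) orbF => /eqP <-.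
  by move: g1; rewrite big1 // => /eqP; rewrite eq_sym oner_eq0.
pose S := [pred x : cfg | cnt x == cnt x0].
pose w := \sum_(x | S x) g x.
have w_pos : 0 < w.
  rewrite /w (bigD1 x0) /=; last by rewrite /S /= eqxx.
  by apply: (lt_le_trans gx0); rewrite lerDl; apply: sumr_ge0 => x _; exact: g0.
have Hsplit : w + \sum_(x | ~~ S x) g x = 1 by rewrite /w -g1 [RHS](bigID S).
have Cx : forall x, S x -> C (cnt x) = C (cnt x0) by move=> x /eqP ->.
have Hmus_w : forall p, \sum_(x | S x) g x * C (cnt x) p = w * C (cnt x0) p.
  by move=> p; rewrite /w mulr_suml; apply: eq_bigr => x Sx; rewrite Cx.
have HS : forall s x, S (phi s x) = S x by move=> s x; rewrite /S /= cnt_phi.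
exists x0.
case: (eqVneq w 1) => [w1 | wn1].
  have r0 : \sum_(x | ~~ S x) g x = 0 by apply: (addrI w); rewrite Hsplit addr0 w1.
  have Hz : forall x, ~~ S x -> g x = 0.
    by move=> x Sx; apply: (psumr_eq0P (P := fun x => ~~ S x)) => // y _; exact: g0.
  apply/ffunP => p; rewrite Emu Hform (bigID S) /= Hmus_w w1 mul1r big1 ?addr0 //.
  by move=> x Sx; rewrite Hz // mul0r.
have w_lt1 : w < 1.
  rewrite lt_def eq_sym wn1 /= -Hsplit lerDl; apply: sumr_ge0 => x _; exact: g0.
have w10 : 0 < 1 - w by rewrite subr_gt0.
pose S' := [pred x : cfg | ~~ S x].
have HS' : forall s x, S' (phi s x) = S' x by move=> s x; rewrite /S' /S /= cnt_phi.
have Hw2 : \sum_(x | S' x) g x = 1 - w by rewrite -Hsplit [w + _]addrC addrK.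
have Hs1 := restrict Hg HS w_pos erefl.
have Hs2 := restrict Hg HS' w10 Hw2.
set g1' := [ffun x => (S x)%:R * g x / w] in Hs1.
set g2' := [ffun x => (S' x)%:R * g x / (1 - w)] in Hs2.
have Hdec : forall p, mus p = w * Pm g1' p + (1 - w) * Pm g2' p.
  move=> p; rewrite Emu !ffunE !mulr_sumr -big_split; apply: eq_bigr => x _ /=.
  have wne : w != 0 by rewrite gt_eqF.
  have w1ne : 1 - w != 0 by rewrite gt_eqF.
  rewrite !ffunE /S' /=; case: (cnt x == cnt x0) => /=; by field; rewrite wne w1ne.
have E12 := Hext _ _ w (Nrep_Pm Hs1) (Nrep_Pm Hs2) (introT andP (conj w_pos w_lt1)) Hdec.
have Hi1 := sym_inv Hs1.
apply/ffunP => p; rewrite Hdec -E12.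
have -> : w * Pm g1' p + (1 - w) * Pm g1' p = Pm g1' p by ring.
rewrite (Pm_formula Hi1).
rewrite (eq_bigr (fun x => (S x)%:R * (g x * C (cnt x) p) / w)); last first.
  by move=> x _; rewrite ffunE mulrAC -!mulrA.
rewrite -mulr_suml sum_ind_pred Hmus_w mulrC mulKf //.
by rewrite gt_eqF.
Qed.

End Aux2.

Theorem corollary2p6 (R : realFieldType) (X : finType) (N : nat)
  (mustar : {ffun X * X -> R}) (lam : {ffun X -> R}) :
  (2 <= N)%N ->
  extreme_point (N_rep N) mustar ->
  lam = M1 mustar ->
  (forall mu : {ffun X * X -> R}, N_rep N mu -> mu <> mustar ->
     Jfun N lam mu < Jfun N lam mustar)
  /\
  (forall mu : {ffun X * X -> R}, N_rep N mu -> M1 mu = lam -> mu <> mustar ->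
     Wcost mu < Wcost mustar).
Proof.
case: N => [|[|n]] // _ Hext Hlam.
have [x0 Emus] := extreme_C Hext.
set n0 := cnt R x0.
have Hn0 : \sum_a n0 a = n.+2%:R by exact: cnt_sum.
have Hlam' : lam = M1 (C n n0) by rewrite Hlam Emus.
have HJ : forall mu, N_rep n.+2 mu -> mu <> mustar -> Jfun n.+2 lam mu < Jfun n.+2 lam mustar.
  move=> mu [_ [g [Hg Hrep]]] Hne.
  have Hi := sym_inv Hg; have Emu := Nrep_eq Hrep.
  case: Hg => [[g0 g1] _].
  have HJmu : Jfun n.+2 lam mu = \sum_x g x * EE n n0 (cnt R x).
    rewrite (@J_lin R X n lam mu g (fun x => C n (cnt R x))).
      by apply: eq_bigr => x _; rewrite Hlam' JC // cnt_sum.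
    by move=> p; rewrite Emu Pm_formula.
  have HJs : Jfun n.+2 lam mustar = EE n n0 n0 by rewrite Emus Hlam' JC.
  rewrite HJmu HJs -subr_gt0.
  rewrite -[X in X - _]mul1r -g1 mulr_suml -sumrN -big_split /=.
  under eq_bigr do rewrite -mulrBr EE_diff.
  case: (boolP [exists x, (0 < g x) && (cnt R x != n0)]) => [/existsP [x1 /andP [gx1 cx1]] | /existsPn Hall].
    rewrite (bigD1 x1) //=; apply: ltr_wpDr.
      apply: sumr_ge0 => x _; apply: mulr_ge0; first exact: g0.
      apply: divr_ge0; last exact: ltW (DD_gt0 R n).
      by apply: sumr_ge0 => a _; exact: sqr_ge0.
    apply: mulr_gt0 => //; apply: divr_gt0; last exact: (DD_gt0 R n).
    have [a Ha] : exists a, n0 a - cnt R x1 a != 0.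
      apply/existsP; apply: contraNT cx1 => /existsPn H; apply/eqP/ffunP => a.
      by move: (H a); rewrite negbK subr_eq0 => /eqP ->.
    rewrite (bigD1 a) //=; apply: ltr_wpDr.
      by apply: sumr_ge0 => b _; exact: sqr_ge0.
    by rewrite lt_def sqrf_eq0 Ha sqr_ge0.
  exfalso; apply: Hne; apply/ffunP => p; rewrite Emu Pm_formula // Emus.
  rewrite (eq_bigr (fun x => g x * C n n0 p)); first by rewrite -mulr_suml g1 mul1r.
  move=> x _; case: (eqVneq (cnt R x) n0) => [-> //|cne].
  have := Hall x; rewrite cne andbT => Hgx.
  have -> : g x = 0 by apply/eqP; rewrite eq_le g0 andbT leNgt.
  by rewrite !mul0r.
split => // mu Hmu HM1 Hne.
have := HJ mu Hmu Hne.
by rewrite /Jfun HM1 -Hlam ltrD2l.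
Qed.
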